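(* Let $f$ be a germ of holomorphic self-map of $\mathbb{C}^2$ tangent to the identity at the origin, of order $k+1$, having $[v]$ as a characteristic direction of degree $s$. Let $\Psi$ be a biholomorphism of $\mathbb{C}^2$ fixing the origin and, near the origin, mapping the complex line $\mathbb{C}v$ into itself. Then $\Psi^{-1}\circ f\circ\Psi$ has $[v]$ as a characteristic direction of degree $s$.
   Context: Write $f(x)=x+\sum_{j\ge k+1}P_j(x)$ with $P_j$ homogeneous of degree $j$ and $P_{k+1}\not\equiv0$ ($k+1$ is the order). $[v]$ is a characteristic direction of a homogeneous map $Q$ if $Q(v)=\lambda v$ for some $\lambda\in\mathbb{C}$, $v\neq 0$. $[v]$ is a characteristic direction of degree $s$ (for $s\ge k+1$) if it is a characteristic direction of each of $P_{k+1},\dots,P_s$. *)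

(* Defs.v *)
(* Formal (power-series) germs of self-maps of K^2,
   represented by their homogeneous components, as pairs of bivariate
   polynomials {poly {poly K}}. *)
From HB Require Import structures.
From mathcomp Require Import all_boot all_order all_algebra.
Set Implicit Arguments. Unset Strict Implicit. Unset Printing Implicit Defensive.
Import Order.TTheory GRing.Theory Num.Theory.
Local Open Scope ring_scope.

Section FormalMaps.
Variable K : fieldType.

(* Bivariate polynomials: outer variable Y = 'X, inner variable X = 'X%:P.
   The coefficient of X^a Y^b in p is (p`_b)`_a. *)
Definition bpoly := {poly {poly K}}.
Definition bX : bpoly := 'X%:P.
Definition bY : bpoly := 'X.

Definition beval (p : bpoly) (x y : K) : K := (p.[y%:P]).[x].

Definition bsubst (p A B : bpoly) : bpoly :=
  \sum_(b < size p) \sum_(a < size (p`_b))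
     ((p`_b)`_a)%:P%:P * A ^+ a * B ^+ b.

Definition hpart (n : nat) (p : bpoly) : bpoly :=
  \sum_(a < n.+1) ((p`_(n - a))`_a)%:P%:P * bX ^+ a * bY ^+ (n - a).

Definition homog (n : nat) (p : bpoly) : Prop := hpart n p = p.

(* A formal map K^2 -> K^2: F n is its homogeneous component of degree n. *)
Definition fmap := nat -> bpoly * bpoly.

Definition formal_map (F : fmap) : Prop :=
  forall n, homog n (F n).1 /\ homog n (F n).2.

Definition fixes0 (F : fmap) : Prop := F 0%N = (0, 0).

Definition map_eval (P : bpoly * bpoly) (v : K * K) : K * K :=
  (beval P.1 v.1 v.2, beval P.2 v.1 v.2).

Definition trunc (G : fmap) (n : nat) : bpoly * bpoly :=
  (\sum_(m < n.+1) (G m).1, \sum_(m < n.+1) (G m).2).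

(* composition F o G, for G fixing the origin:
   (F o G)_n = degree-n part of sum_{j<=n} F_j(G_{<=n}) *)
Definition fcomp (F G : fmap) : fmap := fun n =>
  let T := trunc G n in
  (hpart n (\sum_(j < n.+1) bsubst (F j).1 T.1 T.2),
   hpart n (\sum_(j < n.+1) bsubst (F j).2 T.1 T.2)).

Definition fid : fmap := fun n => if n == 1%N then (bX, bY) else (0, 0).

Definition tangent_id (F : fmap) : Prop := F 0%N = (0, 0) /\ F 1%N = (bX, bY).

Definition has_order (F : fmap) (m : nat) : Prop :=
  [/\ tangent_id F, (2 <= m)%N,
      (forall j, (2 <= j < m)%N -> F j = (0, 0)) & F m <> (0, 0)].

Definition char_dir (P : bpoly * bpoly) (v : K * K) : Prop :=
  v <> (0, 0) /\ exists l : K, map_eval P v = (l * v.1, l * v.2).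

Definition char_dir_deg (F : fmap) (s : nat) (v : K * K) : Prop :=
  exists k : nat, [/\ has_order F k.+1, (k.+1 <= s)%N &
     forall j, (k.+1 <= j <= s)%N -> char_dir (F j) v].

End FormalMaps.

(* Main.v *)
Require Import Defs.
From HB Require Import structures.
From mathcomp Require Import all_boot all_order all_algebra.
From mathcomp Require Import ring zify.
Import GRing.Theory.
Local Open Scope ring_scope.
Set Implicit Arguments. Unset Strict Implicit.

Lemma cf_comm {aR : nzSemiRingType} {R : comNzRingType} (f : aR -> R) (u : R) :
  commr_rmorph f u.
Proof. by move=> x; rewrite /GRing.comm mulrC. Qed.

Definition ev {K : fieldType} {R : comNzRingType} (i : {rmorphism K -> R})
  (p : bpoly K) (x y : R) : R :=
  horner_morph (cf_comm (horner_morph (cf_comm i x)) y) p.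

Lemma evD K R i p q x y : @ev K R i (p + q) x y = ev i p x y + ev i q x y.
Proof. by rewrite /ev rmorphD. Qed.
Lemma evB K R i p q x y : @ev K R i (p - q) x y = ev i p x y - ev i q x y.
Proof. by rewrite /ev rmorphB. Qed.
Lemma evM K R i p q x y : @ev K R i (p * q) x y = ev i p x y * ev i q x y.
Proof. by rewrite /ev rmorphM. Qed.
Lemma ev0 K R i x y : @ev K R i 0 x y = 0.
Proof. by rewrite /ev rmorph0. Qed.
Lemma evXn K R i p n x y : @ev K R i (p ^+ n) x y = ev i p x y ^+ n.
Proof. by rewrite /ev rmorphXn. Qed.
Lemma ev_sum K R i (I : Type) (r : seq I) (P : pred I) (F : I -> bpoly K) x y :
  @ev K R i (\sum_(j <- r | P j) F j) x y = \sum_(j <- r | P j) ev i (F j) x y.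
Proof. by rewrite /ev rmorph_sum. Qed.
Lemma evCC (K : fieldType) R i (c : K) x y : @ev K R i (c%:P%:P) x y = i c.
Proof. rewrite /ev horner_morphC. exact: horner_morphC. Qed.
Lemma evbX K R i x y : @ev K R i (bX K) x y = x.
Proof. rewrite /ev /bX horner_morphC. exact: horner_morphX. Qed.
Lemma evbY K R i x y : @ev K R i (bY K) x y = y.
Proof. by rewrite /ev /bY horner_morphX. Qed.

Lemma evE K R i p x y : @ev K R i p x y =
  \sum_(b < size p) \sum_(a < size (p`_b)) i ((p`_b)`_a) * x ^+ a * y ^+ b.
Proof.
rewrite /ev /horner_morph (horner_coef_wide _ (size_poly _ _)).
apply: eq_bigr => b _; rewrite coef_poly ltn_ord /= /horner_morph.
rewrite (horner_coef_wide _ (size_poly _ _)) mulr_suml.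
by apply: eq_bigr => a _; rewrite coef_poly ltn_ord.
Qed.

Definition iT (K : fieldType) : {rmorphism K -> bpoly K} := (@polyC _) \o (@polyC _).

Lemma ev_nat (K : fieldType) (R1 R2 : comNzRingType) (i1 : {rmorphism K -> R1})
  (i2 : {rmorphism K -> R2}) (phi : {rmorphism R1 -> R2}) p x y :
  (forall c, i2 c = phi (i1 c)) ->
  phi (ev i1 p x y) = ev i2 p (phi x) (phi y).
Proof.
move=> h; rewrite !evE rmorph_sum; apply: eq_bigr => b _.
rewrite rmorph_sum; apply: eq_bigr => a _.
by rewrite !rmorphM !rmorphXn h.
Qed.

Lemma ev_ext (K : fieldType) (R : comNzRingType) (i1 i2 : {rmorphism K -> R}) p x y :
  (forall c, i1 c = i2 c) -> ev i1 p x y = ev i2 p x y.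
Proof.
move=> h; rewrite !evE; apply: eq_bigr => b _; apply: eq_bigr => a _; by rewrite h.
Qed.

Lemma poly_expand (R : nzRingType) (p : {poly R}) :
  p = \sum_(i < size p) (p`_i)%:P * 'X^i.
Proof.
rewrite -[p in LHS]coefK poly_def; apply: eq_bigr => i _; by rewrite mul_polyC.
Qed.

Lemma ev_id (K : fieldType) (p : bpoly K) : ev (iT K) p (bX K) (bY K) = p.
Proof.
rewrite evE [p in RHS]poly_expand; apply: eq_bigr => b _.
rewrite /bY -mulr_suml; congr (_ * _).
rewrite [p`_b in RHS]poly_expand rmorph_sum; apply: eq_bigr => a _.
rewrite /bX /iT /=. by rewrite -rmorphXn -rmorphM.
Qed.

Lemma ev_homog (K : fieldType) (R : comNzRingType) (i : {rmorphism K -> R}) j p c x y :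
  homog j p -> ev i p (c * x) (c * y) = c ^+ j * ev i p x y.
Proof.
rewrite /homog => <-; rewrite /hpart !ev_sum mulr_sumr; apply: eq_bigr => a _.
rewrite !evM !evXn !evCC !evbX !evbY !exprMn.
have -> : c ^+ j = c ^+ a * c ^+ (j - a) by rewrite -exprD subnKC // -ltnS.
ring.
Qed.

Lemma eqT (K : fieldType) (p q : bpoly K) :
  (forall a b, p`_b`_a = q`_b`_a) -> p = q.
Proof. by move=> h; apply/polyP => b; apply/polyP => a; apply: h. Qed.

Lemma mono_coef (K : fieldType) (c : K) a' m a b :
  ((c%:P%:P * bX K ^+ a' * bY K ^+ m : bpoly K)`_b)`_a =
  if (a == a') && (b == m) then c else 0.
Proof.
rewrite /bX /bY -rmorphXn -rmorphM coefMXn.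
case: ltnP => hb.
  by rewrite coef0 (_ : (b == m) = false) ?andbF // ; apply/negbTE; rewrite neq_ltn hb.
have -> : (b == m) = (b <= m)%N by rewrite eqn_leq hb andbT.
rewrite coefC subn_eq0; case: (b <= m)%N; last by rewrite andbF coef0.
rewrite andbT coefCM coefXn; case: (a == a'); by rewrite ?mulr1 ?mulr0.
Qed.

Lemma coef_sumT (K : fieldType) (I : Type) (r : seq I) (P : pred I) (F : I -> bpoly K) a b :
  ((\sum_(j <- r | P j) F j)`_b)`_a = \sum_(j <- r | P j) ((F j)`_b)`_a.
Proof. by rewrite coef_sum coef_sum. Qed.

Lemma hpart_coef (K : fieldType) n (p : bpoly K) a b :
  ((hpart n p)`_b)`_a = if (a + b == n)%N then (p`_b)`_a else 0.
Proof.
rewrite /hpart coef_sumT.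
case: eqP => hab.
  have ha : (a < n.+1)%N by rewrite -hab ltnS leq_addr.
  rewrite (bigD1 (Ordinal ha)) //= big1 ?addr0.
    have e : (n - a = b)%N by rewrite -hab addKn.
    by rewrite mono_coef eqxx /= e eqxx.
  move=> j hj; rewrite mono_coef; case: eqP => // haj.
  by move: hj; rewrite -(inj_eq val_inj) /= haj eqxx.
apply: big1 => j _; rewrite mono_coef; case: eqP => //= haj; case: eqP => // hb.
exfalso; apply: hab; rewrite haj hb subnKC //; by rewrite -ltnS.
Qed.


Lemma hpart_hpart (K : fieldType) n m (p : bpoly K) :
  hpart n (hpart m p) = if n == m then hpart m p else 0.
Proof.
apply: eqT => a b; rewrite hpart_coef.
case: (n =P m) => [->|hnm]; first by rewrite hpart_coef; case: (_ == _).
rewrite !coef0 hpart_coef; case: (a + b =P n) => // h1; case: (a + b =P m) => // h2.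
by exfalso; apply: hnm; rewrite -h1 -h2.
Qed.

Lemma hpart_homog (K : fieldType) n (p : bpoly K) : homog n (hpart n p).
Proof. by rewrite /homog hpart_hpart eqxx. Qed.

Lemma hpartD (K : fieldType) n (p q : bpoly K) : hpart n (p + q) = hpart n p + hpart n q.
Proof.
apply: eqT => a b; rewrite !coefD !hpart_coef !coefD; case: (_ == _) => //; by rewrite addr0.
Qed.

Lemma hpartN (K : fieldType) n (p : bpoly K) : hpart n (- p) = - hpart n p.
Proof.
apply: eqT => a b; rewrite !coefN !hpart_coef !coefN; case: (_ == _) => //; by rewrite oppr0.
Qed.

Lemma hpart0 (K : fieldType) n : hpart n (0 : bpoly K) = 0.
Proof. by apply: eqT => a b; rewrite !hpart_coef !coef0; case: (_ == _). Qed.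

Lemma hpart_sum (K : fieldType) n (I : Type) (r : seq I) (P : pred I) (F : I -> bpoly K) :
  hpart n (\sum_(j <- r | P j) F j) = \sum_(j <- r | P j) hpart n (F j).
Proof.
elim/big_rec2: _ => [|j x y _ e]; first exact: hpart0.
by rewrite hpartD -e.
Qed.

Definition mono {K : fieldType} (c : K) a b : bpoly K := c%:P%:P * bX K ^+ a * bY K ^+ b.

Lemma hpart_mono (K : fieldType) n (c : K) a b :
  hpart n (mono c a b) = if (a + b == n)%N then mono c a b else 0.
Proof.
apply: eqT => a' b'; rewrite hpart_coef.
case: (a + b =P n) => h; rewrite ?coef0 /mono !mono_coef;
  case: (a' =P a) => [->|]; case: (b' =P b) => [->|] => //=; rewrite ?h ?eqxx //.
all: by case: eqP.
Qed.

Lemma expand_mono (K : fieldType) (p : bpoly K) :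
  p = \sum_(b < size p) \sum_(a < size (p`_b)) mono ((p`_b)`_a) a b.
Proof. by rewrite -[p in LHS](ev_id p) evE. Qed.

Definition iS (K : fieldType) : {rmorphism K -> {poly bpoly K}} := (@polyC _) \o iT K.

Definition sc (K : fieldType) (p : bpoly K) : {poly bpoly K} :=
  ev (iS K) p ((bX K)%:P * 'X) ((bY K)%:P * 'X).

Lemma sc_coef (K : fieldType) (p : bpoly K) n : (sc p)`_n = hpart n p.
Proof.
rewrite [p in RHS]expand_mono hpart_sum /sc evE coef_sum; apply: eq_bigr => b _.
rewrite hpart_sum coef_sum; apply: eq_bigr => a _.
rewrite hpart_mono /mono.
have -> : iS K (p`_b)`_a * ((bX K)%:P * 'X) ^+ a * ((bY K)%:P * 'X) ^+ b =
   ((((p`_b)`_a)%:P%:P * bX K ^+ a * bY K ^+ b) : bpoly K)%:P * 'X^(a + b).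
  rewrite /iS /iT /= !exprMn exprD !rmorphM !rmorphXn /=; ring.
rewrite coefCM coefXn eq_sym; case: eqP => _; by rewrite ?mulr1 ?mulr0.
Qed.

Definition dv {A : comNzRingType} (m : nat) (u : {poly A}) := exists w, u = 'X^m * w.

Lemma dv0 (A : comNzRingType) m : dv m (0 : {poly A}).
Proof. by exists 0; rewrite mulr0. Qed.
Lemma dvD (A : comNzRingType) m (u w : {poly A}) : dv m u -> dv m w -> dv m (u + w).
Proof. by move=> [u' ->] [w' ->]; exists (u' + w'); rewrite mulrDr. Qed.
Lemma dvN (A : comNzRingType) m (u : {poly A}) : dv m u -> dv m (- u).
Proof. by move=> [u' ->]; exists (- u'); rewrite mulrN. Qed.
Lemma dvB (A : comNzRingType) m (u w : {poly A}) : dv m u -> dv m w -> dv m (u - w).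
Proof. by move=> hu hw; apply: dvD => //; apply: dvN. Qed.
Lemma dvMl (A : comNzRingType) m (u w : {poly A}) : dv m u -> dv m (w * u).
Proof. by move=> [u' ->]; exists (w * u'); ring. Qed.
Lemma dvMr (A : comNzRingType) m (u w : {poly A}) : dv m u -> dv m (u * w).
Proof. by move=> h; rewrite mulrC; apply: dvMl. Qed.
Lemma dvMM (A : comNzRingType) m n (u w : {poly A}) : dv m u -> dv n w -> dv (m + n) (u * w).
Proof. by move=> [u' ->] [w' ->]; exists (u' * w'); rewrite exprD; ring. Qed.
Lemma dvXn (A : comNzRingType) m : dv m ('X^m : {poly A}).
Proof. by exists 1; rewrite mulr1. Qed.
Lemma dv_le (A : comNzRingType) m n (u : {poly A}) : (m <= n)%N -> dv n u -> dv m u.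
Proof.
move=> h [u' ->]; exists ('X^(n - m) * u'); by rewrite mulrA -exprD subnKC.
Qed.
Lemma dv_sum (A : comNzRingType) m (I : Type) (r : seq I) (P : pred I) (F : I -> {poly A}) :
  (forall j, P j -> dv m (F j)) -> dv m (\sum_(j <- r | P j) F j).
Proof.
move=> h; elim/big_rec: _ => [|j x Pj hx]; first exact: dv0.
by apply: dvD => //; apply: h.
Qed.
Lemma dv_exp (A : comNzRingType) m k (u : {poly A}) : dv m u -> dv (m * k) (u ^+ k).
Proof. by move=> [u' ->]; exists (u' ^+ k); rewrite exprMn -exprM. Qed.
Lemma dv_coef (A : comNzRingType) m (u : {poly A}) i : dv m u -> (i < m)%N -> u`_i = 0.
Proof. by move=> [u' ->] h; rewrite coefXnM h. Qed.
Lemma coef_dv (A : comNzRingType) m (u : {poly A}) : (forall i, (i < m)%N -> u`_i = 0) -> dv m u.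
Proof.
move=> h; exists (drop_poly m u).
have t0 : take_poly m u = 0.
  by apply/polyP => i; rewrite coef_take_poly coef0; case: ifP => // /h.
by rewrite -[u in LHS](poly_take_drop m) t0 add0r mulrC.
Qed.
Lemma dv_shift (A : comNzRingType) m (w : {poly A}) i : ('X^m * w)`_(i + m) = w`_i.
Proof. by rewrite coefXnM ltnNge leq_addl /= addnK. Qed.

Lemma dv1_exp (A : comNzRingType) k (u : {poly A}) : dv 1 u -> dv k (u ^+ k).
Proof. by move=> h; have := dv_exp k h; rewrite mul1n. Qed.

Lemma dv_subXX (A : comNzRingType) m a (x x' : {poly A}) :
  dv m (x - x') -> dv m (x ^+ a - x' ^+ a).
Proof. by move=> h; rewrite subrXX; apply: dvMr. Qed.

Lemma ev_cg (K : fieldType) (A : comNzRingType) (i : {rmorphism K -> {poly A}}) m p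
  (x y x' y' : {poly A}) :
  dv m (x - x') -> dv m (y - y') -> dv m (ev i p x y - ev i p x' y').
Proof.
move=> hx hy; rewrite !evE -sumrB; apply: dv_sum => b _.
rewrite -sumrB; apply: dv_sum => a _.
have -> : i (p`_b)`_a * x ^+ a * y ^+ b - i (p`_b)`_a * x' ^+ a * y' ^+ b =
  i (p`_b)`_a * ((x ^+ a - x' ^+ a) * y ^+ b + x' ^+ a * (y ^+ b - y' ^+ b)) by ring.
apply: dvMl; apply: dvD; [apply: dvMr | apply: dvMl]; exact: dv_subXX.
Qed.

Lemma ev_homogE (K : fieldType) (R : comNzRingType) (i : {rmorphism K -> R}) j p x y :
  homog j p -> ev i p x y =
    \sum_(a < j.+1) i ((p`_(j - a))`_a) * x ^+ a * y ^+ (j - a).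
Proof.
rewrite /homog => h; rewrite -[p in LHS]h /hpart ev_sum; apply: eq_bigr => a _.
by rewrite !evM !evXn evCC evbX evbY.
Qed.

Lemma ev_dvh (K : fieldType) (A : comNzRingType) (i : {rmorphism K -> {poly A}}) j m p
  (x y : {poly A}) : homog j p -> dv m x -> dv m y -> dv (m * j) (ev i p x y).
Proof.
move=> hp [x' ->] [y' ->]; rewrite (ev_homog _ _ _ _ hp) -exprM.
by apply: dvMr; apply: dvXn.
Qed.

Lemma ev_hi (K : fieldType) (A : comNzRingType) (i : {rmorphism K -> {poly A}}) N Z
  (x y : {poly A}) : (forall n, (n <= N)%N -> hpart n Z = 0) ->
  dv 1 x -> dv 1 y -> dv N.+1 (ev i Z x y).
Proof.
move=> hZ hx hy; rewrite evE; apply: dv_sum => b _; apply: dv_sum => a _.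
case: (leqP (a + b) N) => hab.
  have : ((hpart (a + b) Z)`_b)`_a = 0 by rewrite hZ // !coef0.
  by rewrite hpart_coef eqxx => ->; rewrite rmorph0 !mul0r; apply: dv0.
rewrite -mulrA; apply: dvMl; apply: (dv_le hab); exact: (dvMM (dv1_exp a hx) (dv1_exp b hy)).
Qed.

Lemma pow_taylor (A : comNzRingType) m a (x D : {poly A}) :
  (1 <= m)%N -> dv 1 x -> dv m D -> (1 <= a)%N ->
  dv (m + a.-1) ((x + D) ^+ a - x ^+ a).
Proof.
move=> hm hx hD ha; rewrite subrXX (_ : x + D - x = D); last by ring.
apply: dvMM => //; apply: dv_sum => l _.
have hxD : dv 1 (x + D) by apply: dvD => //; apply: dv_le hD.
apply: (@dv_le _ _ ((a.-1 - l) + l)%N); first by rewrite subnK // -ltnS prednK // ltn_ord.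
exact: (dvMM (dv1_exp _ hxD) (dv1_exp _ hx)).
Qed.

Lemma mono_taylor (A : comNzRingType) m a b (x y D D' : {poly A}) :
  (1 <= m)%N -> dv 1 x -> dv 1 y -> dv m D -> dv m D' -> (2 <= a + b)%N ->
  dv m.+1 ((x + D) ^+ a * (y + D') ^+ b - x ^+ a * y ^+ b).
Proof.
move=> hm hx hy hD hD' hab.
have -> : (x + D) ^+ a * (y + D') ^+ b - x ^+ a * y ^+ b =
  ((x + D) ^+ a - x ^+ a) * (y + D') ^+ b + x ^+ a * ((y + D') ^+ b - y ^+ b) by ring.
have hyD : dv 1 (y + D') by apply: dvD => //; apply: dv_le hD'.
apply: dvD.
  case: a hab => [|a] hab; first by rewrite !expr0 subrr mul0r; apply: dv0.
  apply: (@dv_le _ _ (m + a.+1.-1 + b)); first by simpl; lia.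
  by apply: dvMM; [apply: pow_taylor | apply: dv1_exp].
case: b hab => [|b] hab; first by rewrite !expr0 subrr mulr0; apply: dv0.
apply: (@dv_le _ _ (a + (m + b.+1.-1))).
  by simpl; lia.
by apply: dvMM; [apply: dv1_exp | apply: pow_taylor].
Qed.

Lemma ev_taylor (K : fieldType) (A : comNzRingType) (i : {rmorphism K -> {poly A}}) j m p
  (x y D D' : {poly A}) : homog j p -> (1 <= m)%N -> dv 1 x -> dv 1 y -> dv m D -> dv m D' ->
  dv m.+1 (ev i p (x + D) (y + D') - ev i p x y - (if j == 1%N then ev i p D D' else 0)).
Proof.
move=> hp hm hx hy hD hD'; rewrite !(ev_homogE _ _ _ hp).
case: eqP => [ej|nj].
  subst j; rewrite !big_ord_recr !big_ord0 /=.
  rewrite !expr0 !expr1.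
  match goal with |- dv _ ?e => have -> : e = 0 by ring end.
  exact: dv0.
rewrite subr0 -sumrB; apply: dv_sum => a _.
rewrite -!mulrA -mulrBr; apply: dvMl.
case: j nj hp a => [|j] nj hp a.
  have -> : nat_of_ord a = 0%N by case: a => [[]].
  by rewrite !expr0 subrr; apply: dv0.
apply: mono_taylor => //.
have : (a <= j.+1)%N by rewrite -ltnS.
by case: j nj hp a => [|j] //; lia.
Qed.

Lemma coef_ev_low (K : fieldType) (A : comNzRingType) (i : {rmorphism K -> {poly A}})
  (i0 : {rmorphism K -> A}) j m p (x y : {poly A}) :
  (forall c, i c = (i0 c)%:P) -> homog j p -> dv m x -> dv m y ->
  (ev i p x y)`_(m * j) = ev i0 p (x`_m) (y`_m).
Proof.
move=> hi hp [x' ->] [y' ->]; rewrite (ev_homog _ _ _ _ hp) -exprM.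
rewrite -[(m * j)%N]add0n dv_shift -[m]add0n !dv_shift.
rewrite -!horner_coef0.
have h := ev_nat (phi := horner_eval 0) (i1 := i) (i2 := i0) p x' y'.
rewrite /= in h; apply: h => c; rewrite hi /horner_eval; by rewrite hornerC.
Qed.

Definition evm {K : fieldType} {R : comNzRingType} (i : {rmorphism K -> R}) (x y : R) :
  {rmorphism bpoly K -> R} := horner_morph (cf_comm (horner_morph (cf_comm i x)) y).

Lemma evmE (K : fieldType) (R : comNzRingType) (i : {rmorphism K -> R}) x y p :
  evm i x y p = ev i p x y.
Proof. by []. Qed.

Definition CS {K : fieldType} {R : comNzRingType} (i : {rmorphism K -> R})
  (P : nat -> bpoly K) N (x y : R) : R := \sum_(j < N.+1) ev i (P j) x y.

Definition W {K : fieldType} (P : nat -> bpoly K) N : {poly bpoly K} :=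
  \sum_(m < N.+1) (P m)%:P * 'X^m.

Definition fc {K : fieldType} (P G1 G2 : nat -> bpoly K) n : bpoly K :=
  hpart n (\sum_(j < n.+1) bsubst (P j) (\sum_(m < n.+1) G1 m) (\sum_(m < n.+1) G2 m)).

Lemma bsubst_ev (K : fieldType) (p A B : bpoly K) : bsubst p A B = ev (iT K) p A B.
Proof. by rewrite evE. Qed.

Lemma sc_ev (K : fieldType) (q A B : bpoly K) :
  sc (ev (iT K) q A B) = ev (iS K) q (sc A) (sc B).
Proof.
rewrite /sc -!evmE; apply: ev_nat => c; by rewrite evmE evCC.
Qed.

Lemma sc_homog (K : fieldType) m (q : bpoly K) : homog m q -> sc q = q%:P * 'X^m.
Proof.
move=> h; rewrite /sc ![_ * 'X]mulrC (ev_homog _ _ _ _ h) mulrC; congr (_ * _).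
rewrite -[q in RHS](ev_id q).
rewrite -[RHS]/(polyC (ev (iT K) q (bX K) (bY K))).
by rewrite (ev_nat (i2 := iS K) (phi := polyC)).
Qed.

Lemma sc_sum (K : fieldType) (I : Type) (r : seq I) (P : pred I) (F : I -> bpoly K) :
  sc (\sum_(j <- r | P j) F j) = \sum_(j <- r | P j) sc (F j).
Proof. by rewrite /sc ev_sum. Qed.

Lemma split_sum (V : nmodType) n N (F : nat -> V) : (n <= N)%N ->
  \sum_(j < N.+1) F j = \sum_(j < n.+1) F j + \sum_(n.+1 <= j < N.+1) F j.
Proof.
move=> h; rewrite -!(big_mkord xpredT) (big_cat_nat _ (n := n.+1)) //.
Qed.

Lemma coefW (K : fieldType) (P : nat -> bpoly K) N n : (n <= N)%N -> (W P N)`_n = P n.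
Proof.
move=> h; rewrite /W coef_sum (bigD1 (Ordinal (h : n < N.+1)%N)) //= big1.
  by rewrite addr0 coefCM coefXn eqxx mulr1.
move=> j hj; rewrite coefCM coefXn; case: eqP => [e|]; last by rewrite mulr0.
by move: hj; rewrite -(inj_eq val_inj) /= e eqxx.
Qed.

Lemma dvW (K : fieldType) (P : nat -> bpoly K) N : P 0%N = 0 -> dv 1 (W P N).
Proof.
move=> h0; apply: dv_sum => -[[|m] hm] _ /=; first by rewrite h0 mul0r; apply: dv0.
by apply: dvMl; apply: (@dv_le _ _ m.+1) => //; apply: dvXn.
Qed.

Lemma dvW_diff (K : fieldType) (P : nat -> bpoly K) n N : (n <= N)%N ->
  dv n.+1 (W P N - W P n).
Proof.
move=> h; rewrite /W (split_sum (fun m => (P m)%:P * 'X^m) h) addrC addKr.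
rewrite big_nat_cond; apply: dv_sum => j /andP [/andP [hj _] _]; apply: dvMl; apply: (dv_le hj); apply: dvXn.
Qed.

Lemma coef_eq_dv (A : comNzRingType) n (u w : {poly A}) : dv n.+1 (u - w) -> u`_n = w`_n.
Proof. by move=> h; apply/eqP; rewrite -subr_eq0 -coefB (dv_coef h). Qed.

Lemma sc_trunc (K : fieldType) (G : nat -> bpoly K) n :
  (forall m, homog m (G m)) -> sc (\sum_(m < n.+1) G m) = W G n.
Proof. by move=> h; rewrite sc_sum; apply: eq_bigr => m _; apply: sc_homog. Qed.

Lemma sc_bsum (K : fieldType) (P G1 G2 : nat -> bpoly K) n :
  (forall m, homog m (G1 m)) -> (forall m, homog m (G2 m)) ->
  sc (\sum_(j < n.+1) bsubst (P j) (\sum_(m < n.+1) G1 m) (\sum_(m < n.+1) G2 m)) =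
  CS (iS K) P n (W G1 n) (W G2 n).
Proof.
move=> h1 h2; rewrite sc_sum /CS; apply: eq_bigr => j _.
by rewrite bsubst_ev sc_ev !sc_trunc.
Qed.

Lemma F1 (K : fieldType) (P G1 G2 : nat -> bpoly K) n N :
  (forall m, homog m (G1 m)) -> (forall m, homog m (G2 m)) -> G1 0%N = 0 -> G2 0%N = 0 ->
  (forall j, homog j (P j)) -> (n <= N)%N ->
  fc P G1 G2 n = (CS (iS K) P N (W G1 N) (W G2 N))`_n.
Proof.
move=> h1 h2 z1 z2 hP hn; rewrite /fc -sc_coef sc_bsum //; symmetry; apply: coef_eq_dv.
rewrite /CS (split_sum (fun j => ev (iS K) (P j) (W G1 N) (W G2 N)) hn).
set a := \sum_(j < n.+1) _; set b := \sum_(_ <= _ < _) _; set c := \sum_(j < n.+1) _.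
have -> : a + b - c = (a - c) + b by ring.
apply: dvD.
  rewrite /a /c -sumrB; apply: dv_sum => j _; apply: ev_cg; exact: dvW_diff.
rewrite /b big_nat_cond; apply: dv_sum => j /andP [/andP [hj _] _].
apply: (dv_le hj); have := ev_dvh (iS K) (hP j) (dvW N z1) (dvW N z2); by rewrite mul1n.
Qed.

Lemma hpart_fc_sum (K : fieldType) (P G1 G2 : nat -> bpoly K) n N : (n <= N)%N ->
  hpart n (\sum_(m < N.+1) fc P G1 G2 m) = fc P G1 G2 n.
Proof.
move=> hn; rewrite hpart_sum (bigD1 (Ordinal (hn : n < N.+1)%N)) //= big1.
  by rewrite addr0 /fc hpart_hpart eqxx.
move=> j hj; rewrite /fc hpart_hpart; case: eqP => // e.
by move: hj; rewrite -(inj_eq val_inj) /= e eqxx.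
Qed.

Lemma F2 (K : fieldType) (P G1 G2 : nat -> bpoly K) N (x y : {poly bpoly K}) :
  (forall m, homog m (G1 m)) -> (forall m, homog m (G2 m)) -> G1 0%N = 0 -> G2 0%N = 0 ->
  (forall j, homog j (P j)) -> dv 1 x -> dv 1 y ->
  dv N.+1 (CS (iS K) P N (CS (iS K) G1 N x y) (CS (iS K) G2 N x y) - CS (iS K) (fc P G1 G2) N x y).
Proof.
move=> h1 h2 z1 z2 hP hx hy.
set T1 := \sum_(m < N.+1) G1 m; set T2 := \sum_(m < N.+1) G2 m.
have e1 : CS (iS K) G1 N x y = evm (iS K) x y T1 by rewrite evmE ev_sum.
have e2 : CS (iS K) G2 N x y = evm (iS K) x y T2 by rewrite evmE ev_sum.
set X := \sum_(j < N.+1) bsubst (P j) T1 T2.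
set Y := \sum_(m < N.+1) fc P G1 G2 m.
have eX : CS (iS K) P N (CS (iS K) G1 N x y) (CS (iS K) G2 N x y) = ev (iS K) X x y.
  rewrite e1 e2 /CS /X ev_sum; apply: eq_bigr => j _.
  rewrite bsubst_ev -evmE; symmetry; apply: ev_nat => c; by rewrite evmE evCC.
have eY : CS (iS K) (fc P G1 G2) N x y = ev (iS K) Y x y by rewrite /Y ev_sum.
rewrite eX eY -evB; apply: ev_hi => // n hn.
rewrite hpartD hpartN /Y hpart_fc_sum // -sc_coef /X sc_bsum //.
by rewrite -(F1 h1 h2 z1 z2 hP hn) subrr.
Qed.

Lemma CS_cg (K : fieldType) (A : comNzRingType) (i : {rmorphism K -> {poly A}}) P N m
  (x y x' y' : {poly A}) :
  dv m (x - x') -> dv m (y - y') -> dv m (CS i P N x y - CS i P N x' y').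
Proof. by move=> hx hy; rewrite /CS -sumrB; apply: dv_sum => j _; apply: ev_cg. Qed.

Lemma CS_ext (K : fieldType) (R : comNzRingType) (i : {rmorphism K -> R}) (P Q : nat -> bpoly K) N x y :
  (forall j, (j <= N)%N -> P j = Q j) -> CS i P N x y = CS i Q N x y.
Proof. by move=> h; apply: eq_bigr => j _; rewrite h // -ltnS. Qed.

Lemma CS_low_dv (K : fieldType) (A : comNzRingType) (i : {rmorphism K -> {poly A}}) Q N k
  (x y : {poly A}) : (forall j, homog j (Q j)) -> (forall j, (j <= k)%N -> Q j = 0) ->
  dv 1 x -> dv 1 y -> dv k.+1 (CS i Q N x y).
Proof.
move=> hQ h0 hx hy; apply: dv_sum => j _.
case: (leqP j k) => hj; first by rewrite h0 // ev0; apply: dv0.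
apply: (dv_le hj); have := ev_dvh i (hQ j) hx hy; by rewrite mul1n.
Qed.

Lemma CS_low_coef (K : fieldType) (A : comNzRingType) (i : {rmorphism K -> {poly A}})
  (i0 : {rmorphism K -> A}) Q N k (x y : {poly A}) :
  (forall c, i c = (i0 c)%:P) ->
  (forall j, homog j (Q j)) -> (forall j, (j <= k)%N -> Q j = 0) ->
  dv 1 x -> dv 1 y -> (k.+1 <= N)%N ->
  (CS i Q N x y)`_k.+1 = ev i0 (Q k.+1) (x`_1) (y`_1).
Proof.
move=> hi hQ h0 hx hy hk.
rewrite /CS (split_sum (fun j => ev i (Q j) x y) hk) coefD.
set tl := \sum_(_ <= _ < _) _.
have -> : tl`_k.+1 = 0.
  apply: (dv_coef (m := k.+2)) => //.
  rewrite /tl big_nat_cond; apply: dv_sum => j /andP [/andP [hj _] _].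
  apply: (dv_le hj); have := ev_dvh i (hQ j) hx hy; by rewrite mul1n.
rewrite addr0.
rewrite big_ord_recr /= big1 ?add0r.
  by have := coef_ev_low hi (hQ k.+1) hx hy; rewrite (mul1n k.+1).
by move=> j _; rewrite h0 ?ev0 // -ltnS.
Qed.

Lemma CS_taylor (K : fieldType) (A : comNzRingType) (i : {rmorphism K -> {poly A}}) P N m
  (x y D D' : {poly A}) : (forall j, homog j (P j)) -> (1 <= N)%N -> (1 <= m)%N ->
  dv 1 x -> dv 1 y -> dv m D -> dv m D' ->
  dv m.+1 (CS i P N (x + D) (y + D') - CS i P N x y - ev i (P 1%N) D D').
Proof.
move=> hP hN hm hx hy hD hD'.
have -> : ev i (P 1%N) D D' = \sum_(j < N.+1) (if j == 1%N :> nat then ev i (P j) D D' else 0).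
  rewrite (bigD1 (Ordinal (hN : 1 < N.+1)%N)) //= big1 ?addr0 //.
  move=> j hj; case: eqP => // e; move: hj; by rewrite -(inj_eq val_inj) /= e eqxx.
rewrite /CS -!sumrB; apply: dv_sum => j _; exact: ev_taylor.
Qed.

Lemma CS_tau (K : fieldType) (P : nat -> bpoly K) N : (forall j, homog j (P j)) ->
  CS (iS K) P N ((bX K)%:P * 'X) ((bY K)%:P * 'X) = W P N.
Proof. by move=> h; apply: eq_bigr => j _; rewrite -sc_homog. Qed.

Lemma W_F1 (K : fieldType) (P G1 G2 : nat -> bpoly K) N :
  (forall m, homog m (G1 m)) -> (forall m, homog m (G2 m)) -> G1 0%N = 0 -> G2 0%N = 0 ->
  (forall j, homog j (P j)) ->
  dv N.+1 (W (fc P G1 G2) N - CS (iS K) P N (W G1 N) (W G2 N)).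
Proof.
move=> h1 h2 z1 z2 hP; apply: coef_dv => n hn.
have hn' : (n <= N)%N by rewrite -ltnS.
by rewrite coefB coefW // (F1 h1 h2 z1 z2 hP hn') subrr.
Qed.

Lemma fc0 (K : fieldType) (P G1 G2 : nat -> bpoly K) : P 0%N = 0 -> fc P G1 G2 0 = 0.
Proof. by move=> h; rewrite /fc big_ord1 h bsubst_ev ev0 hpart0. Qed.

Lemma fc_homog (K : fieldType) (P G1 G2 : nat -> bpoly K) n : homog n (fc P G1 G2 n).
Proof. exact: hpart_homog. Qed.

Lemma beval_ev (K : fieldType) (p : bpoly K) x y : beval p x y = ev idfun p x y.
Proof.
have e : beval p x y = ((horner_eval x) \o (horner_eval y%:P)) p by [].
rewrite e [p in LHS]expand_mono evE !rmorph_sum; apply: eq_bigr => b _.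
rewrite !rmorph_sum; apply: eq_bigr => a _.
rewrite /mono !rmorphM !rmorphXn /= /horner_eval /bX /bY.
by rewrite !hornerE.
Qed.

Definition iK (K : fieldType) : {rmorphism K -> {poly K}} := polyC.
Definition rho (K : fieldType) (v1 v2 : K) : {rmorphism {poly bpoly K} -> {poly K}} :=
  map_poly (evm idfun v1 v2).

Lemma rho_ev (K : fieldType) v1 v2 p (x y : {poly bpoly K}) :
  rho v1 v2 (ev (iS K) p x y) = ev (iK K) p (rho v1 v2 x) (rho v1 v2 y).
Proof.
apply: ev_nat => c; rewrite /rho /iS /= map_polyC /=; congr polyC.
by rewrite evmE /iT /= evCC.
Qed.

Lemma rho_CS (K : fieldType) v1 v2 P N (x y : {poly bpoly K}) :
  rho v1 v2 (CS (iS K) P N x y) = CS (iK K) P N (rho v1 v2 x) (rho v1 v2 y).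
Proof. by rewrite /CS rmorph_sum; apply: eq_bigr => j _; apply: rho_ev. Qed.

Lemma rho_dv (K : fieldType) v1 v2 m (u : {poly bpoly K}) : dv m u -> dv m (rho v1 v2 u).
Proof.
move=> [w ->]; exists (rho v1 v2 w); by rewrite rmorphM rmorphXn /rho /= map_polyX.
Qed.

Lemma rho_coef (K : fieldType) v1 v2 (u : {poly bpoly K}) j :
  (rho v1 v2 u)`_j = ev idfun (u`_j) v1 v2.
Proof. by rewrite /rho coef_map. Qed.

Lemma rho_x0 (K : fieldType) v1 v2 : rho v1 v2 ((bX K)%:P * 'X) = v1%:P * 'X.
Proof. by rewrite rmorphM /rho /= map_polyC map_polyX /= evmE evbX. Qed.
Lemma rho_y0 (K : fieldType) v1 v2 : rho v1 v2 ((bY K)%:P * 'X) = v2%:P * 'X.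
Proof. by rewrite rmorphM /rho /= map_polyC map_polyX /= evmE evbY. Qed.

Lemma ev_line (K : fieldType) j p (phi : {poly K}) v1 v2 : homog j p ->
  ev (iK K) p (phi * v1%:P) (phi * v2%:P) = phi ^+ j * (ev idfun p v1 v2)%:P.
Proof.
move=> h; rewrite (ev_homog _ _ _ _ h); congr (_ * _).
symmetry; by apply: (ev_nat (i1 := idfun) (i2 := iK K) (phi := polyC)).
Qed.

Lemma CS_recr (K : fieldType) (R : comNzRingType) (i : {rmorphism K -> R}) P N x y :
  CS i P N.+1 x y = CS i P N x y + ev i (P N.+1) x y.
Proof. by rewrite /CS big_ord_recr. Qed.

Lemma CS_zero (K : fieldType) (R : comNzRingType) (i : {rmorphism K -> R}) P x y :
  CS i P 0 x y = ev i (P 0%N) x y.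
Proof. by rewrite /CS big_ord1. Qed.

Lemma line_CS (K : fieldType) (P1 P2 : nat -> bpoly K) N (phi : {poly K}) v1 v2 :
  (forall j, homog j (P1 j)) -> (forall j, homog j (P2 j)) ->
  (forall j, (j <= N)%N -> exists c, ev idfun (P1 j) v1 v2 = c * v1 /\ ev idfun (P2 j) v1 v2 = c * v2) ->
  exists psi, CS (iK K) P1 N (phi * v1%:P) (phi * v2%:P) = psi * v1%:P /\
              CS (iK K) P2 N (phi * v1%:P) (phi * v2%:P) = psi * v2%:P.
Proof.
move=> h1 h2; elim: N => [|N IH] h.
  have [c [c1 c2]] := h 0%N (leqnn 0).
  exists (phi ^+ 0 * c%:P); rewrite !CS_zero !(ev_line _ _ _ (h1 _)) !(ev_line _ _ _ (h2 _)).
  by rewrite c1 c2 !rmorphM /= !mulrA.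
have [psi [e1 e2]] := IH (fun j hj => h j (leqW hj)).
have [c [c1 c2]] := h N.+1 (leqnn _).
exists (psi + phi ^+ N.+1 * c%:P); rewrite !CS_recr e1 e2.
rewrite (ev_line _ _ _ (h1 _)) (ev_line _ _ _ (h2 _)) c1 c2 !rmorphM /=; split; ring.
Qed.

Lemma homog0 (K : fieldType) j : homog j (0 : bpoly K).
Proof. exact: hpart0. Qed.

Lemma CS_split (K : fieldType) (R : comNzRingType) (i : {rmorphism K -> R}) P N x y :
  (1 <= N)%N ->
  CS i P N x y = ev i (P 1%N) x y + CS i (fun j => if j == 1%N then 0 else P j) N x y.
Proof.
move=> hN; rewrite /CS (bigD1 (Ordinal (hN : 1 < N.+1)%N)) //= [in RHS](bigD1 (Ordinal (hN : 1 < N.+1)%N)) //=.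

have -> : ev i (0 : bpoly K) x y = 0 by apply: ev0.
rewrite add0r; congr (_ + _); apply: eq_bigr => j hj; case: eqP => // e.
by move: hj; rewrite -(inj_eq val_inj) /= e eqxx.
Qed.

Lemma CS_fid1 (K : fieldType) (R : comNzRingType) (i : {rmorphism K -> R}) N x y :
  (1 <= N)%N -> CS i (fun n => (fid K n).1) N x y = x.
Proof.
move=> hN; rewrite (CS_split _ _ _ _ hN) /fid /= evbX /CS big1 ?addr0 // => j _.
by case: (_ == 1%N) => /=; rewrite ev0.
Qed.

Lemma CS_fid2 (K : fieldType) (R : comNzRingType) (i : {rmorphism K -> R}) N x y :
  (1 <= N)%N -> CS i (fun n => (fid K n).2) N x y = y.
Proof.
move=> hN; rewrite (CS_split _ _ _ _ hN) /fid /= evbY /CS big1 ?addr0 // => j _.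
by case: (_ == 1%N) => /=; rewrite ev0.
Qed.

Lemma inverse_S (K : fieldType) (Phi Psi : fmap K) N (x y : {poly bpoly K}) :
  formal_map Phi -> formal_map Psi -> fixes0 Psi ->
  (forall n, fcomp Phi Psi n = fid K n) -> (1 <= N)%N -> dv 1 x -> dv 1 y ->
  dv N.+1 (CS (iS K) (fun j => (Phi j).1) N (CS (iS K) (fun j => (Psi j).1) N x y)
            (CS (iS K) (fun j => (Psi j).2) N x y) - x) /\
  dv N.+1 (CS (iS K) (fun j => (Phi j).2) N (CS (iS K) (fun j => (Psi j).1) N x y)
            (CS (iS K) (fun j => (Psi j).2) N x y) - y).
Proof.
move=> hPhi hPsi z hinv hN hx hy.
have h1 : forall m, homog m (Psi m).1 by move=> m; case: (hPsi m).
have h2 : forall m, homog m (Psi m).2 by move=> m; case: (hPsi m).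
have z1 : (Psi 0%N).1 = 0 by rewrite z.
have z2 : (Psi 0%N).2 = 0 by rewrite z.
split.
  have := F2 (P := fun j => (Phi j).1) N h1 h2 z1 z2 (fun j => proj1 (hPhi j)) hx hy.
  set L := CS _ (fc _ _ _) _ _ _.
  have -> : L = x.
  transitivity (CS (iS K) (fun n => (fid K n).1) N x y); last exact: CS_fid1.
  by apply: CS_ext => n _; rewrite -hinv.
  done.
have := F2 (P := fun j => (Phi j).2) N h1 h2 z1 z2 (fun j => proj2 (hPhi j)) hx hy.
set L := CS _ (fc _ _ _) _ _ _.
have -> : L = y.
  transitivity (CS (iS K) (fun n => (fid K n).2) N x y); last exact: CS_fid2.
  by apply: CS_ext => n _; rewrite -hinv.
done.
Qed.

Lemma comp_expand (K : fieldType) (Pc : nat -> bpoly K) (Gc xc P1 P2 D1 D2 : {poly bpoly K}) N k :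
  (forall j, homog j (Pc j)) -> (1 <= k)%N -> (k.+1 <= N)%N -> dv 1 P1 -> dv 1 P2 ->
  dv k.+1 D1 -> dv k.+1 D2 ->
  dv N.+1 (Gc - CS (iS K) Pc N (P1 + D1) (P2 + D2)) ->
  dv N.+1 (CS (iS K) Pc N P1 P2 - xc) ->
  dv k.+2 (Gc - xc - ev (iS K) (Pc 1%N) D1 D2).
Proof.
move=> hP hk hkN h1 h2 hD1 hD2 a b.
have t := CS_taylor (iS K) (N := N) hP (leq_trans hk (ltnW hkN)) (ltn0Sn k) h1 h2 hD1 hD2.
have -> : Gc - xc - ev (iS K) (Pc 1%N) D1 D2 =
  (Gc - CS (iS K) Pc N (P1 + D1) (P2 + D2)) +
  (CS (iS K) Pc N (P1 + D1) (P2 + D2) - CS (iS K) Pc N P1 P2 - ev (iS K) (Pc 1%N) D1 D2) +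
  (CS (iS K) Pc N P1 P2 - xc) by ring.
by apply: dvD; [apply: dvD => //|]; apply: (dv_le (n := N.+1)).
Qed.

Lemma coef_extract (A : comNzRingType) (Gc xc E : {poly A}) k :
  dv k.+2 (Gc - xc - E) -> forall n, (n < k.+2)%N -> Gc`_n = xc`_n + E`_n.
Proof.
move=> h n hn; have := dv_coef h hn; rewrite !coefB => e.
by apply/eqP; rewrite -subr_eq0 opprD addrA e.
Qed.

Lemma ev_assoc (K : fieldType) (R : comNzRingType) (i : {rmorphism K -> R}) p q1 q2 (a b : R) :
  ev i p (ev i q1 a b) (ev i q2 a b) = ev i (ev (iT K) p q1 q2) a b.
Proof. rewrite -!evmE; symmetry; apply: ev_nat => c; by rewrite evmE evCC. Qed.

Lemma x0_coef (K : fieldType) n : ((bX K)%:P * 'X)`_n = if n == 1%N then bX K else 0.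
Proof. by rewrite coefCM coefX; case: (n == 1%N); rewrite ?mulr1 ?mulr0. Qed.
Lemma y0_coef (K : fieldType) n : ((bY K)%:P * 'X)`_n = if n == 1%N then bY K else 0.
Proof. by rewrite coefCM coefX; case: (n == 1%N); rewrite ?mulr1 ?mulr0. Qed.

Lemma dvx0 (K : fieldType) : dv 1 ((bX K)%:P * 'X).
Proof. by apply: dvMl; apply: dvXn. Qed.
Lemma dvy0 (K : fieldType) : dv 1 ((bY K)%:P * 'X).
Proof. by apply: dvMl; apply: dvXn. Qed.

Lemma LA (K : fieldType) (Phi Psi : fmap K) N :
  formal_map Phi -> formal_map Psi -> fixes0 Phi -> fixes0 Psi ->
  (forall n, fcomp Phi Psi n = fid K n) -> (1 <= N)%N ->
  ev (iT K) (Phi 1%N).1 (Psi 1%N).1 (Psi 1%N).2 = bX K /\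
  ev (iT K) (Phi 1%N).2 (Psi 1%N).1 (Psi 1%N).2 = bY K.
Proof.
move=> hPhi hPsi zPhi zPsi hinv hN.
have [a b] := inverse_S hPhi hPsi zPsi hinv hN (dvx0 K) (dvy0 K).
have h1 : forall m, homog m (Psi m).1 by move=> m; case: (hPsi m).
have h2 : forall m, homog m (Psi m).2 by move=> m; case: (hPsi m).
rewrite !CS_tau // in a b.
have dW1 : dv 1 (W (fun j => (Psi j).1) N) by apply: dvW; rewrite zPsi.
have dW2 : dv 1 (W (fun j => (Psi j).2) N) by apply: dvW; rewrite zPsi.
have z1 : forall j, (j <= 0)%N -> (Phi j).1 = 0 by case=> // _; rewrite zPhi.
have z2 : forall j, (j <= 0)%N -> (Phi j).2 = 0 by case=> // _; rewrite zPhi.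
have ca := coef_eq_dv (n := 1) (dv_le (hN : (2 <= N.+1)%N) a).
have cb := coef_eq_dv (n := 1) (dv_le (hN : (2 <= N.+1)%N) b).
rewrite x0_coef in ca; rewrite y0_coef in cb.
rewrite (CS_low_coef (i0 := iT K) _ (fun j => proj1 (hPhi j)) z1 dW1 dW2 hN) // in ca.
rewrite (CS_low_coef (i0 := iT K) _ (fun j => proj2 (hPhi j)) z2 dW1 dW2 hN) // in cb.
by rewrite !coefW in ca cb.
Qed.

Lemma ev_h1_0 (K : fieldType) (R : comNzRingType) (i : {rmorphism K -> R}) p :
  homog 1 p -> ev i p 0 0 = 0.
Proof. by move=> h; have := ev_homog i 0 0 0 h; rewrite !mul0r. Qed.

Lemma step_lemma (K : fieldType) (Psi Phi : fmap K) (N : nat) (v1 v2 c : K)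
  (G1 G2 psf : {poly K}) :
  (forall j, homog j (Psi j).1) -> (forall j, homog j (Psi j).2) ->
  homog 1 (Phi 1%N).1 -> homog 1 (Phi 1%N).2 -> (1 <= N)%N -> c != 0 ->
  (forall j, (j <= N)%N -> exists c, ev idfun (Psi j).1 v1 v2 = c * v1 /\ ev idfun (Psi j).2 v1 v2 = c * v2) ->
  (forall a b, ev idfun (Phi 1%N).1 (ev idfun (Psi 1%N).1 a b) (ev idfun (Psi 1%N).2 a b) = a) ->
  (forall a b, ev idfun (Phi 1%N).2 (ev idfun (Psi 1%N).1 a b) (ev idfun (Psi 1%N).2 a b) = b) ->
  ev idfun (Phi 1%N).1 v1 v2 = c^-1 * v1 -> ev idfun (Phi 1%N).2 v1 v2 = c^-1 * v2 ->
  dv N.+1 (CS (iK K) (fun j => (Psi j).1) N G1 G2 - psf * v1%:P) ->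
  dv N.+1 (CS (iK K) (fun j => (Psi j).2) N G1 G2 - psf * v2%:P) ->
  forall m, (1 <= m)%N -> (m <= N)%N -> forall phi, dv 1 phi ->
    dv m (G1 - phi * v1%:P) -> dv m (G2 - phi * v2%:P) ->
    exists phi', dv 1 phi' /\ dv m.+1 (G1 - phi' * v1%:P) /\ dv m.+1 (G2 - phi' * v2%:P).
Proof.
move=> hPs1 hPs2 hPh1 hPh2 hN cnz hlP hML1 hML2 Mv1 Mv2 R1 R2 m hm hmN phi dphi e1h e2h.
have hMv : forall a, ev idfun (Phi 1%N).1 (a * v1) (a * v2) = a * ev idfun (Phi 1%N).1 v1 v2 /\
    ev idfun (Phi 1%N).2 (a * v1) (a * v2) = a * ev idfun (Phi 1%N).2 v1 v2.
  by move=> a; rewrite !(ev_homog _ _ _ _ hPh1) !(ev_homog _ _ _ _ hPh2) !expr1.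
set e1 := G1 - phi * v1%:P in e1h *; set e2 := G2 - phi * v2%:P in e2h *.
have g1e : G1 = phi * v1%:P + e1 by rewrite /e1 addrC subrK.
have g2e : G2 = phi * v2%:P + e2 by rewrite /e2 addrC subrK.
have [psP [eP1 eP2]] := line_CS phi hPs1 hPs2 hlP.
have dpv1 : dv 1 (phi * v1%:P) by apply: dvMr.
have dpv2 : dv 1 (phi * v2%:P) by apply: dvMr.
have T1 := CS_taylor (iK K) hPs1 hN hm dpv1 dpv2 e1h e2h.
have T2 := CS_taylor (iK K) hPs2 hN hm dpv1 dpv2 e1h e2h.
rewrite -g1e -g2e eP1 in T1; rewrite -g1e -g2e eP2 in T2.
have hmN' : (m.+1 <= N.+1)%N by [].
have A1 : dv m.+1 (ev (iK K) (Psi 1%N).1 e1 e2 - (psf - psP) * v1%:P).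
  set C := CS _ _ _ G1 G2 in R1 T1.
  have -> : ev (iK K) (Psi 1%N).1 e1 e2 - (psf - psP) * v1%:P =
    (C - psf * v1%:P) - (C - psP * v1%:P - ev (iK K) (Psi 1%N).1 e1 e2) by ring.
  apply: dvB; [exact: (dv_le hmN' R1) | exact: T1].
have A2 : dv m.+1 (ev (iK K) (Psi 1%N).2 e1 e2 - (psf - psP) * v2%:P).
  set C := CS _ _ _ G1 G2 in R2 T2.
  have -> : ev (iK K) (Psi 1%N).2 e1 e2 - (psf - psP) * v2%:P =
    (C - psf * v2%:P) - (C - psP * v2%:P - ev (iK K) (Psi 1%N).2 e1 e2) by ring.
  apply: dvB; [exact: (dv_le hmN' R2) | exact: T2].
have k1 := coef_eq_dv A1; have k2 := coef_eq_dv A2.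
have hiK : forall c0, iK K c0 = (idfun c0)%:P by [].
have ce1 := coef_ev_low hiK (hPs1 1%N) e1h e2h.
have ce2 := coef_ev_low hiK (hPs2 1%N) e1h e2h.
rewrite muln1 in ce1 ce2.
rewrite ce1 coefMC in k1; rewrite ce2 coefMC in k2.
set kap := (psf - psP)`_m in k1 k2.
have em1 : e1`_m = kap * c^-1 * v1.
  by rewrite -(hML1 (e1`_m) (e2`_m)) k1 k2 (proj1 (hMv kap)) Mv1 mulrA.
have em2 : e2`_m = kap * c^-1 * v2.
  by rewrite -(hML2 (e1`_m) (e2`_m)) k1 k2 (proj2 (hMv kap)) Mv2 mulrA.
exists (phi + (kap * c^-1)%:P * 'X^m); split.
  apply: dvD; first exact: dphi.
  apply: dvMl; apply: (dv_le hm); apply: dvXn.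
split; apply: coef_dv => i hi.
  rewrite g1e (_ : phi * v1%:P + e1 - (phi + (kap * c^-1)%:P * 'X^m) * v1%:P =
     e1 - (kap * c^-1)%:P * 'X^m * v1%:P); last by ring.
  rewrite coefB coefMC coefCM coefXn.
  case: (ltngtP i m) => him; last by rewrite him ?eqxx em1 ?mulr1 subrr.
    by rewrite (dv_coef e1h him) mulr0 mul0r subrr.
  by exfalso; lia.
rewrite g2e (_ : phi * v2%:P + e2 - (phi + (kap * c^-1)%:P * 'X^m) * v2%:P =
   e2 - (kap * c^-1)%:P * 'X^m * v2%:P); last by ring.
rewrite coefB coefMC coefCM coefXn.
case: (ltngtP i m) => him; last by rewrite him ?eqxx em2 ?mulr1 subrr.
  by rewrite (dv_coef e2h him) mulr0 mul0r subrr.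
by exfalso; lia.
Qed.

Lemma iter_lemma (K : fieldType) (Psi Phi : fmap K) (N : nat) (v1 v2 c : K)
  (G1 G2 psf : {poly K}) :
  (forall j, homog j (Psi j).1) -> (forall j, homog j (Psi j).2) ->
  homog 1 (Phi 1%N).1 -> homog 1 (Phi 1%N).2 -> (1 <= N)%N -> c != 0 ->
  (forall j, (j <= N)%N -> exists c, ev idfun (Psi j).1 v1 v2 = c * v1 /\ ev idfun (Psi j).2 v1 v2 = c * v2) ->
  (forall a b, ev idfun (Phi 1%N).1 (ev idfun (Psi 1%N).1 a b) (ev idfun (Psi 1%N).2 a b) = a) ->
  (forall a b, ev idfun (Phi 1%N).2 (ev idfun (Psi 1%N).1 a b) (ev idfun (Psi 1%N).2 a b) = b) ->
  ev idfun (Phi 1%N).1 v1 v2 = c^-1 * v1 -> ev idfun (Phi 1%N).2 v1 v2 = c^-1 * v2 ->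
  dv N.+1 (CS (iK K) (fun j => (Psi j).1) N G1 G2 - psf * v1%:P) ->
  dv N.+1 (CS (iK K) (fun j => (Psi j).2) N G1 G2 - psf * v2%:P) ->
  dv 1 G1 -> dv 1 G2 ->
  exists phi, dv N.+1 (G1 - phi * v1%:P) /\ dv N.+1 (G2 - phi * v2%:P).
Proof.
move=> hPs1 hPs2 hPh1 hPh2 hN cnz hlP hML1 hML2 Mv1 Mv2 R1 R2 dG1 dG2.
suff : forall m, (m <= N)%N -> exists phi, dv 1 phi /\ dv m.+1 (G1 - phi * v1%:P) /\ dv m.+1 (G2 - phi * v2%:P).
  by move=> /(_ N (leqnn N)) [phi [_ h]]; exists phi.
elim=> [|m IH] hm.
  by exists 0; rewrite !mul0r !subr0; split => //; apply: dv0.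
have [phi [dphi [h1 h2]]] := IH (ltnW hm).
exact: (step_lemma hPs1 hPs2 hPh1 hPh2 hN cnz hlP hML1 hML2 Mv1 Mv2 R1 R2 (ltn0Sn m) hm dphi h1 h2).
Qed.

Unset Implicit Arguments. Set Strict Implicit.

Theorem lemma2p2 (K : fieldType) (f Psi Phi : fmap K) (k s : nat) (v : K * K) :
  formal_map f -> formal_map Psi -> formal_map Phi ->
  tangent_id f -> has_order f k.+1 -> (k.+1 <= s)%N ->
  (forall j, (k.+1 <= j <= s)%N -> char_dir (f j) v) ->
  fixes0 Psi -> fixes0 Phi ->
  (forall n, fcomp Phi Psi n = fid K n) ->
  (forall n, fcomp Psi Phi n = fid K n) ->
  (forall n, exists c : K, map_eval (Psi n) v = (c * v.1, c * v.2)) ->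
  char_dir_deg (fcomp Phi (fcomp f Psi)) s v.
Proof.
move=> hf hPsi hPhi _ hord hks hcd zPsi zPhi hPhiPsi hPsiPhi hline.
case: hord => [[f0 f1] hk2 fmid fk].
set N := s.
have hk : (1 <= k)%N by [].
have hN : (1 <= N)%N by apply: leq_trans hks.
have hf1 : forall j, homog j (f j).1 by move=> j; case: (hf j).
have hf2 : forall j, homog j (f j).2 by move=> j; case: (hf j).
have hPs1 : forall j, homog j (Psi j).1 by move=> j; case: (hPsi j).
have hPs2 : forall j, homog j (Psi j).2 by move=> j; case: (hPsi j).
have hPh1 : forall j, homog j (Phi j).1 by move=> j; case: (hPhi j).
have hPh2 : forall j, homog j (Phi j).2 by move=> j; case: (hPhi j).
set h := fcomp f Psi.
set g := fcomp Phi h.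
have hh1 : forall j, homog j (h j).1 by move=> j; exact: (fc_homog (fun j => (f j).1) (fun m => (Psi m).1) (fun m => (Psi m).2) j).
have hh2 : forall j, homog j (h j).2 by move=> j; exact: (fc_homog (fun j => (f j).2) (fun m => (Psi m).1) (fun m => (Psi m).2) j).
have zh : h 0%N = (0, 0).
  rewrite /h /fcomp /=; congr pair.
    by apply: (fc0 (P := fun j => (f j).1) (fun m => (Psi m).1) (fun m => (Psi m).2)); rewrite f0.
  by apply: (fc0 (P := fun j => (f j).2) (fun m => (Psi m).1) (fun m => (Psi m).2)); rewrite f0.
have zh1 : (h 0%N).1 = 0 by rewrite zh.
have zh2 : (h 0%N).2 = 0 by rewrite zh.
have zPs1 : (Psi 0%N).1 = 0 by rewrite zPsi.
have zPs2 : (Psi 0%N).2 = 0 by rewrite zPsi.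
have zPh1 : (Phi 0%N).1 = 0 by rewrite zPhi.
have zPh2 : (Phi 0%N).2 = 0 by rewrite zPhi.
set P1 := W (fun j => (Psi j).1) N.
set P2 := W (fun j => (Psi j).2) N.
set H1 := W (fun j => (h j).1) N.
set H2 := W (fun j => (h j).2) N.
set G1 := W (fun j => (g j).1) N.
set G2 := W (fun j => (g j).2) N.
have dP1 : dv 1 P1 by apply: dvW.
have dP2 : dv 1 P2 by apply: dvW.
have dH1 : dv 1 H1 by apply: dvW.
have dH2 : dv 1 H2 by apply: dvW.
have s1a : dv N.+1 (H1 - CS (iS K) (fun j => (f j).1) N P1 P2) by apply: W_F1.
have s1b : dv N.+1 (H2 - CS (iS K) (fun j => (f j).2) N P1 P2) by apply: W_F1.
have s3a : dv N.+1 (G1 - CS (iS K) (fun j => (Phi j).1) N H1 H2) by apply: W_F1.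
have s3b : dv N.+1 (G2 - CS (iS K) (fun j => (Phi j).2) N H1 H2) by apply: W_F1.
set Q1 := fun j => if j == 1%N then 0 else (f j).1.
set Q2 := fun j => if j == 1%N then 0 else (f j).2.
set D1 := CS (iS K) Q1 N P1 P2.
set D2 := CS (iS K) Q2 N P1 P2.
have s2a : CS (iS K) (fun j => (f j).1) N P1 P2 = P1 + D1.
  by rewrite (CS_split _ _ _ _ hN) f1 /= evbX.
have s2b : CS (iS K) (fun j => (f j).2) N P1 P2 = P2 + D2.
  by rewrite (CS_split _ _ _ _ hN) f1 /= evbY.
rewrite s2a in s1a; rewrite s2b in s1b.
have s4a : dv N.+1 (G1 - CS (iS K) (fun j => (Phi j).1) N (P1 + D1) (P2 + D2)).
  have -> : G1 - CS (iS K) (fun j => (Phi j).1) N (P1 + D1) (P2 + D2) =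
    (G1 - CS (iS K) (fun j => (Phi j).1) N H1 H2) +
    (CS (iS K) (fun j => (Phi j).1) N H1 H2 - CS (iS K) (fun j => (Phi j).1) N (P1 + D1) (P2 + D2)) by ring.
  by apply: dvD => //; apply: CS_cg.
have s4b : dv N.+1 (G2 - CS (iS K) (fun j => (Phi j).2) N (P1 + D1) (P2 + D2)).
  have -> : G2 - CS (iS K) (fun j => (Phi j).2) N (P1 + D1) (P2 + D2) =
    (G2 - CS (iS K) (fun j => (Phi j).2) N H1 H2) +
    (CS (iS K) (fun j => (Phi j).2) N H1 H2 - CS (iS K) (fun j => (Phi j).2) N (P1 + D1) (P2 + D2)) by ring.
  by apply: dvD => //; apply: CS_cg.
have [s5a s5b] := inverse_S hPhi hPsi zPsi hPhiPsi hN (dvx0 K) (dvy0 K).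
rewrite !CS_tau // -/P1 -/P2 in s5a s5b.
have hQ1 : forall j, homog j (Q1 j) by move=> j; rewrite /Q1; case: (_ == _) => //; exact: homog0.
have hQ2 : forall j, homog j (Q2 j) by move=> j; rewrite /Q2; case: (_ == _) => //; exact: homog0.
have zQ1 : forall j, (j <= k)%N -> Q1 j = 0.
  move=> j hj; rewrite /Q1; case: eqP => // /eqP j1.
  case: j hj j1 => [|j] hj j1; first by rewrite f0.
  by rewrite fmid //; apply/andP; split; [lia | lia].
have zQ2 : forall j, (j <= k)%N -> Q2 j = 0.
  move=> j hj; rewrite /Q2; case: eqP => // /eqP j1.
  case: j hj j1 => [|j] hj j1; first by rewrite f0.
  by rewrite fmid //; apply/andP; split; [lia | lia].
have s6a : dv k.+1 D1 by apply: CS_low_dv.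
have s6b : dv k.+1 D2 by apply: CS_low_dv.
have s7a := comp_expand hPh1 hk hks dP1 dP2 s6a s6b s4a s5a.
have s7b := comp_expand hPh2 hk hks dP1 dP2 s6a s6b s4b s5b.
set E1 := ev (iS K) (Phi 1%N).1 D1 D2.
set E2 := ev (iS K) (Phi 1%N).2 D1 D2.
have dE1 : dv k.+1 E1 by have := ev_dvh (iS K) (hPh1 1%N) s6a s6b; rewrite muln1.
have dE2 : dv k.+1 E2 by have := ev_dvh (iS K) (hPh2 1%N) s6a s6b; rewrite muln1.
have hiS : forall c, iS K c = (iT K c)%:P by [].
have cE1 : E1`_k.+1 = ev (iT K) (Phi 1%N).1 (D1`_k.+1) (D2`_k.+1).
  by have := coef_ev_low hiS (hPh1 1%N) s6a s6b; rewrite muln1.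
have cE2 : E2`_k.+1 = ev (iT K) (Phi 1%N).2 (D1`_k.+1) (D2`_k.+1).
  by have := coef_ev_low hiS (hPh2 1%N) s6a s6b; rewrite muln1.
have k1 : (k.+1 == 1%N) = false by apply/negbTE; rewrite eqSS -lt0n.
have cD1 : D1`_k.+1 = ev (iT K) (f k.+1).1 (Psi 1%N).1 (Psi 1%N).2.
  rewrite /D1 (CS_low_coef (i0 := iT K) hiS hQ1 zQ1 dP1 dP2 hks) /Q1 k1 /P1 /P2 !coefW //.
have cD2 : D2`_k.+1 = ev (iT K) (f k.+1).2 (Psi 1%N).1 (Psi 1%N).2.
  rewrite /D2 (CS_low_coef (i0 := iT K) hiS hQ2 zQ2 dP1 dP2 hks) /Q2 k1 /P1 /P2 !coefW //.
have cg1 : forall n, (n < k.+2)%N -> (g n).1 = ((bX K)%:P * 'X)`_n + E1`_n.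
  move=> n hn; rewrite -(coef_extract s7a hn) /G1 coefW //; lia.
have cg2 : forall n, (n < k.+2)%N -> (g n).2 = ((bY K)%:P * 'X)`_n + E2`_n.
  move=> n hn; rewrite -(coef_extract s7b hn) /G2 coefW //; lia.
have gn : forall n, (n < k.+1)%N ->
    g n = (if n == 1%N then bX K else 0, if n == 1%N then bY K else 0).
  move=> n hn; rewrite [g n]surjective_pairing cg1 ?cg2 ?x0_coef ?y0_coef; try lia.
  by rewrite (dv_coef dE1 hn) (dv_coef dE2 hn) !addr0.
have gk : g k.+1 = (ev (iT K) (Phi 1%N).1 (ev (iT K) (f k.+1).1 (Psi 1%N).1 (Psi 1%N).2)
                                         (ev (iT K) (f k.+1).2 (Psi 1%N).1 (Psi 1%N).2),
                    ev (iT K) (Phi 1%N).2 (ev (iT K) (f k.+1).1 (Psi 1%N).1 (Psi 1%N).2)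
                                         (ev (iT K) (f k.+1).2 (Psi 1%N).1 (Psi 1%N).2)).
  rewrite [g k.+1]surjective_pairing cg1 // cg2 // x0_coef y0_coef k1 !add0r cE1 cE2 cD1 cD2 //.
have [l1 l2] := LA hPhi hPsi zPhi zPsi hPhiPsi hN.
have [m1 m2] := LA hPsi hPhi zPsi zPhi hPsiPhi hN.
have gnz : g k.+1 <> (0, 0).
  rewrite gk => -[e1 e2].
  set Z1 := ev (iT K) (f k.+1).1 _ _ in e1 e2.
  set Z2 := ev (iT K) (f k.+1).2 _ _ in e1 e2.
  have z1 : Z1 = 0.
    transitivity (ev (iT K) (bX K) Z1 Z2); first by rewrite evbX.
    by rewrite -m1 -ev_assoc e1 e2 ev_h1_0.
  have z2 : Z2 = 0.
    transitivity (ev (iT K) (bY K) Z1 Z2); first by rewrite evbY.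
    by rewrite -m2 -ev_assoc e1 e2 ev_h1_0.
  apply: fk; rewrite [f k.+1]surjective_pairing; congr pair.
    by rewrite -[(f k.+1).1]ev_id -{1}m1 -{1}m2 ev_assoc -/Z1 z1 ev0.
  by rewrite -[(f k.+1).2]ev_id -{1}m1 -{1}m2 ev_assoc -/Z2 z2 ev0.
have gord : has_order g k.+1.
  split => //.
  - split; first by rewrite (gn 0%N).
    by rewrite (gn 1%N).
  - move=> j /andP [hj1 hj2]; rewrite gn //.
    by have -> : (j == 1%N) = false by apply/negbTE; rewrite neq_ltn hj1 orbT.
have [i1 i2] := inverse_S hPsi hPhi zPhi hPsiPhi hN dH1 dH2.
have c1 : dv N.+1 (CS (iS K) (fun j => (Psi j).1) N G1 G2 - (P1 + D1)).
  have -> : CS (iS K) (fun j => (Psi j).1) N G1 G2 - (P1 + D1) =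
    (CS (iS K) (fun j => (Psi j).1) N G1 G2 - CS (iS K) (fun j => (Psi j).1) N
        (CS (iS K) (fun j => (Phi j).1) N H1 H2) (CS (iS K) (fun j => (Phi j).2) N H1 H2)) +
    (CS (iS K) (fun j => (Psi j).1) N (CS (iS K) (fun j => (Phi j).1) N H1 H2)
        (CS (iS K) (fun j => (Phi j).2) N H1 H2) - H1) + (H1 - (P1 + D1)) by ring.
  by apply: dvD => //; apply: dvD => //; apply: CS_cg.
have c2 : dv N.+1 (CS (iS K) (fun j => (Psi j).2) N G1 G2 - (P2 + D2)).
  have -> : CS (iS K) (fun j => (Psi j).2) N G1 G2 - (P2 + D2) =
    (CS (iS K) (fun j => (Psi j).2) N G1 G2 - CS (iS K) (fun j => (Psi j).2) N
        (CS (iS K) (fun j => (Phi j).1) N H1 H2) (CS (iS K) (fun j => (Phi j).2) N H1 H2)) +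
    (CS (iS K) (fun j => (Psi j).2) N (CS (iS K) (fun j => (Phi j).1) N H1 H2)
        (CS (iS K) (fun j => (Phi j).2) N H1 H2) - H2) + (H2 - (P2 + D2)) by ring.
  by apply: dvD => //; apply: dvD => //; apply: CS_cg.
rewrite -s2a in c1; rewrite -s2b in c2.
exists k; split => // jj hjj.
case: v hcd hline => v1 v2 hcd hline.
have vnz : (v1, v2) <> (0, 0) by case: (hcd k.+1) => //; apply/andP; split.
have [c hc1] := hline 1%N.
have hL1 : ev idfun (Psi 1%N).1 v1 v2 = c * v1 by rewrite -beval_ev; case: hc1.
have hL2 : ev idfun (Psi 1%N).2 v1 v2 = c * v2 by rewrite -beval_ev; case: hc1.
have hML1 : forall a b, ev idfun (Phi 1%N).1 (ev idfun (Psi 1%N).1 a b) (ev idfun (Psi 1%N).2 a b) = a.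
  by move=> a b; rewrite ev_assoc l1 evbX.
have hML2 : forall a b, ev idfun (Phi 1%N).2 (ev idfun (Psi 1%N).1 a b) (ev idfun (Psi 1%N).2 a b) = b.
  by move=> a b; rewrite ev_assoc l2 evbY.
have hMv : forall a, ev idfun (Phi 1%N).1 (a * v1) (a * v2) = a * ev idfun (Phi 1%N).1 v1 v2 /\
    ev idfun (Phi 1%N).2 (a * v1) (a * v2) = a * ev idfun (Phi 1%N).2 v1 v2.
  by move=> a; rewrite !(ev_homog _ _ _ _ (hPh1 1%N)) !(ev_homog _ _ _ _ (hPh2 1%N)) !expr1.
have cnz : c != 0.
  apply/eqP => c0; apply: vnz.
  have := hML1 v1 v2; have := hML2 v1 v2; rewrite hL1 hL2 c0 !mul0r.
  by rewrite !ev_h1_0 // => <- <-.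
have Mv1 : ev idfun (Phi 1%N).1 v1 v2 = c^-1 * v1.
  have e := hML1 v1 v2; rewrite hL1 hL2 (proj1 (hMv c)) in e.
  by apply: (mulfI cnz); rewrite e mulrA divff // mul1r.
have Mv2 : ev idfun (Phi 1%N).2 v1 v2 = c^-1 * v2.
  have e := hML2 v1 v2; rewrite hL1 hL2 (proj2 (hMv c)) in e.
  by apply: (mulfI cnz); rewrite e mulrA divff // mul1r.
set r := rho v1 v2.
have R1 : dv N.+1 (CS (iK K) (fun j => (Psi j).1) N (r G1) (r G2) - CS (iK K) (fun j => (f j).1) N (r P1) (r P2)).
  by rewrite -!rho_CS -rmorphB; apply: rho_dv.
have R2 : dv N.+1 (CS (iK K) (fun j => (Psi j).2) N (r G1) (r G2) - CS (iK K) (fun j => (f j).2) N (r P1) (r P2)).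
  by rewrite -!rho_CS -rmorphB; apply: rho_dv.
have rP1 : r P1 = CS (iK K) (fun j => (Psi j).1) N ('X * v1%:P) ('X * v2%:P).
  by rewrite /P1 -CS_tau // rho_CS rho_x0 rho_y0 ![_ * 'X]mulrC.
have rP2 : r P2 = CS (iK K) (fun j => (Psi j).2) N ('X * v1%:P) ('X * v2%:P).
  by rewrite /P2 -CS_tau // rho_CS rho_x0 rho_y0 ![_ * 'X]mulrC.
have hlP : forall j, (j <= N)%N -> exists c, ev idfun (Psi j).1 v1 v2 = c * v1 /\ ev idfun (Psi j).2 v1 v2 = c * v2.
  move=> j _; have [c' hc'] := hline j; exists c'; rewrite -!beval_ev; by case: hc'.
have hlf : forall j, (j <= N)%N -> exists c, ev idfun (f j).1 v1 v2 = c * v1 /\ ev idfun (f j).2 v1 v2 = c * v2.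
  move=> j hjN; case: (leqP k.+1 j) => hkj.
    have [_ [l hl]] := hcd j (introT andP (conj hkj hjN)).
    exists l; rewrite -!beval_ev; by case: hl.
  case: j hjN hkj => [|[|j]] hjN hkj.
  - by exists 0; rewrite f0 !ev0 !mul0r.
  - by exists 1; rewrite f1 evbX evbY !mul1r.
  - by exists 0; rewrite fmid ?ev0 ?mul0r //; lia.
have [pi [ep1 ep2]] := line_CS 'X hPs1 hPs2 hlP.
rewrite -rP1 -rP2 in ep1 ep2.
rewrite ep1 ep2 in R1 R2.
have [psf [ef1 ef2]] := line_CS pi hf1 hf2 hlf.
rewrite ef1 in R1; rewrite ef2 in R2.
have dG1 : dv 1 (r G1) by apply: rho_dv; apply: dvW; rewrite (gn 0%N).
have dG2 : dv 1 (r G2) by apply: rho_dv; apply: dvW; rewrite (gn 0%N).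
have [phi [fin1 fin2]] := iter_lemma hPs1 hPs2 (hPh1 1%N) (hPh2 1%N) hN cnz hlP hML1 hML2 Mv1 Mv2 R1 R2 dG1 dG2.
have hjN : (jj <= N)%N by case/andP: hjj.
split => //; exists phi`_jj.
rewrite /map_eval /= !beval_ev.
have hjN1 : (jj.+1 <= N.+1)%N by [].
have q1 := coef_eq_dv (dv_le hjN1 fin1); have q2 := coef_eq_dv (dv_le hjN1 fin2).
rewrite !coefMC rho_coef /G1 coefW // in q1; rewrite !coefMC rho_coef /G2 coefW // in q2.
by rewrite q1 q2.
Qed.
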